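(* Let $G$ be a closed and continuous metric cyclic graph whose vertex set $V$ is homeomorphic to $S^1$, and let $u\in V$. Then the map $[0,\gamma_V(u)]\to V$, $r\mapsto g_r(u)$, is continuous.
   Context: Identify $S^1$ with $[0,1)$; $d_{S^1}(x,y)\in[0,1)$ is the normalized counterclockwise distance from $x$ to $y$, and $[x,y]_V$ denotes the set of points of $V$ on the closed counterclockwise arc from $x$ to $y$. A directed graph $G=(V,E)$ (no loops, no opposite edges) with $V\subseteq S^1$ is cyclic if whenever $u_0\to u_1$, every $w\in V$ strictly counterclockwise-between $u_0$ and $u_1$ has $u_0\to w$ and $w\to u_1$. Define $\gamma_m(u_0)=\sup\{\sum_{i=0}^{m-1}d_{S^1}(u_i,u_{i+1}):u_0\to\cdots\to u_m\text{ in }G\}$ and $f_1(u)=u+\gamma_1(u)\bmod1$. $G$ is closed if $V$ is closed in $S^1$ (then $f_1(u)\in V$), and continuous if every $\gamma_m$ is continuous. $G$ is metric if $V$ carries a metric $d_V$ inducing the subspace topology from $S^1$ such that $d_V(u_0,u_1)<d_V(u_0,u_2)$ for every directed path $u_0\to u_1\to u_2$. Set $\gamma_V(u)=d_V(u,f_1(u))$. For $r\in[0,\gamma_V(u)]$, $g_r(u)$ is the unique point $w\in[u,f_1(u)]_V$ with $d_V(u,w)=r$. *)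

(* Defs.v *)
From Stdlib Require Import Reals ClassicalEpsilon.
From Coquelicot Require Import Coquelicot.
Open Scope R_scope.

(* S^1 identified with [0,1). *)
Definition S1 (x : R) : Prop := 0 <= x < 1.

(* normalized counterclockwise distance from x to y, in [0,1) *)
Definition dS (x y : R) : R := frac_part (y - x).

(* the usual (geodesic) metric of S^1, inducing its topology *)
Definition dc (x y : R) : R := Rmin (dS x y) (dS y x).

Definition digraph (V : R -> Prop) (E : R -> R -> Prop) : Prop :=
  (forall x, V x -> S1 x) /\
  (forall x y, E x y -> V x /\ V y) /\
  (forall x, ~ E x x) /\
  (forall x y, E x y -> ~ E y x).

Definition strictly_between (u0 w u1 : R) : Prop :=
  0 < dS u0 w /\ dS u0 w < dS u0 u1.

Definition cyclic (V : R -> Prop) (E : R -> R -> Prop) : Prop :=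
  forall u0 u1, E u0 u1 ->
    forall w, V w -> strictly_between u0 w u1 -> E u0 w /\ E w u1.

Definition is_path (E : R -> R -> Prop) (p : nat -> R) (m : nat) : Prop :=
  forall i, (i < m)%nat -> E (p i) (p (S i)).

Fixpoint path_len (p : nat -> R) (m : nat) : R :=
  match m with
  | O => 0
  | S k => path_len p k + dS (p k) (p (S k))
  end.

Definition gamma (E : R -> R -> Prop) (m : nat) (u0 : R) : R :=
  real (Lub_Rbar (fun s => exists p, p O = u0 /\ is_path E p m /\ s = path_len p m)).

Definition f1 (E : R -> R -> Prop) (u : R) : R := frac_part (u + gamma E 1 u).

Definition closed_in_S1 (V : R -> Prop) : Prop :=
  forall x, S1 x -> (forall d, 0 < d -> exists v, V v /\ dc x v < d) -> V x.

Definition cont_on_V (V : R -> Prop) (h : R -> R) : Prop :=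
  forall u, V u -> forall eps, 0 < eps -> exists del, 0 < del /\
    forall v, V v -> dc u v < del -> Rabs (h v - h u) < eps.

Definition continuous_graph (E : R -> R -> Prop) (V : R -> Prop) : Prop :=
  forall m, cont_on_V V (gamma E m).

Definition cont_S1 (A B : R -> Prop) (phi : R -> R) : Prop :=
  (forall x, A x -> B (phi x)) /\
  forall x, A x -> forall eps, 0 < eps -> exists del, 0 < del /\
    forall y, A y -> dc x y < del -> dc (phi x) (phi y) < eps.

Definition homeomorphic_to_S1 (V : R -> Prop) : Prop :=
  exists phi psi : R -> R,
    cont_S1 S1 V phi /\ cont_S1 V S1 psi /\
    (forall x, S1 x -> psi (phi x) = x) /\
    (forall v, V v -> phi (psi v) = v).

Definition metric_on (V : R -> Prop) (dV : R -> R -> R) : Prop :=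
  (forall x y, V x -> V y -> 0 <= dV x y) /\
  (forall x y, V x -> V y -> (dV x y = 0 <-> x = y)) /\
  (forall x y, V x -> V y -> dV x y = dV y x) /\
  (forall x y z, V x -> V y -> V z -> dV x z <= dV x y + dV y z).

Definition induces_subspace_topology (V : R -> Prop) (dV : R -> R -> R) : Prop :=
  (forall u, V u -> forall eps, 0 < eps -> exists del, 0 < del /\
     forall v, V v -> dc u v < del -> dV u v < eps) /\
  (forall u, V u -> forall eps, 0 < eps -> exists del, 0 < del /\
     forall v, V v -> dV u v < del -> dc u v < eps).

Definition metric_graph (V : R -> Prop) (E : R -> R -> Prop) (dV : R -> R -> R) : Prop :=
  metric_on V dV /\ induces_subspace_topology V dV /\
  (forall u0 u1 u2, E u0 u1 -> E u1 u2 -> dV u0 u1 < dV u0 u2).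

Definition gammaV (E : R -> R -> Prop) (dV : R -> R -> R) (u : R) : R :=
  dV u (f1 E u).

(* [x,y]_V : points of V on the closed counterclockwise arc from x to y *)
Definition arcV (V : R -> Prop) (x y w : R) : Prop := V w /\ dS x w <= dS x y.

(* g_r(u): the (unique) w in [u, f1 u]_V with dV u w = r (definite description) *)
Definition g (V : R -> Prop) (E : R -> R -> Prop) (dV : R -> R -> R) (r u : R) : R :=
  epsilon (inhabits 0) (fun w => arcV V u (f1 E u) w /\ dV u w = r).

(* Main.v *)
Require Import Defs.
From Stdlib Require Import Reals Lra ClassicalEpsilon Classical.
From Coquelicot Require Import Coquelicot.
Open Scope R_scope.

Lemma frac_unique z w (n : Z) : 0 <= w < 1 -> z = w + IZR n -> frac_part z = w.
Proof.
  intros Hw Hz. unfold frac_part, Int_part.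
  assert (Hu : (n + 1)%Z = up z) by (apply tech_up; rewrite plus_IZR; simpl; lra).
  rewrite <- Hu, minus_IZR, plus_IZR. simpl. lra.
Qed.

Lemma frac_decomp z : z = frac_part z + IZR (Int_part z).
Proof. unfold frac_part. ring. Qed.

Lemma frac_rng z : 0 <= frac_part z < 1.
Proof. destruct (base_fp z). lra. Qed.

Lemma frac_shift z n : frac_part (z + IZR n) = frac_part z.
Proof.
  apply frac_unique with (n := (Int_part z + n)%Z). apply frac_rng.
  rewrite plus_IZR. rewrite (frac_decomp z) at 1. ring.
Qed.

Lemma frac_id x : 0 <= x < 1 -> frac_part x = x.
Proof. intros. apply frac_unique with (n := 0%Z); simpl; lra. Qed.

Lemma frac_sub a b : frac_part (frac_part b - frac_part a) = frac_part (b - a).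
Proof.
  replace (frac_part b - frac_part a) with ((b - a) + IZR (Int_part a - Int_part b)).
  apply frac_shift. rewrite minus_IZR. rewrite (frac_decomp a) at 1. rewrite (frac_decomp b) at 1. ring.
Qed.

Lemma frac_le z : 0 <= z -> frac_part z <= z.
Proof.
  intros. destruct (Rlt_dec z 1). rewrite frac_id; lra. destruct (frac_rng z); lra.
Qed.

Lemma dS_conc x y : S1 x -> S1 y -> dS x y = if Rle_dec x y then y - x else y - x + 1.
Proof.
  unfold S1, dS; intros. destruct Rle_dec.
  apply frac_id; lra. apply frac_unique with (n := (-1)%Z); simpl; lra.
Qed.

Lemma dc_frac a b : dc (frac_part a) (frac_part b) <= Rabs (b - a).
Proof.
  unfold dc, dS. rewrite !frac_sub. destruct (Rle_dec a b).
  rewrite Rabs_right by lra. eapply Rle_trans. apply Rmin_l. apply frac_le; lra.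
  rewrite Rabs_left by lra. eapply Rle_trans. apply Rmin_r. replace (- (b - a)) with (a - b) by ring. apply frac_le; lra.
Qed.

Lemma dS_eq0 x y : S1 x -> S1 y -> dS x y = 0 -> x = y.
Proof. intros Hx Hy. rewrite dS_conc by auto. unfold S1 in *. destruct Rle_dec; lra. Qed.

Lemma dS_inj x a b : S1 x -> S1 a -> S1 b -> dS x a = dS x b -> a = b.
Proof. intros Hx Ha Hb. rewrite !dS_conc by auto. unfold S1 in *. destruct Rle_dec; destruct Rle_dec; lra. Qed.

Lemma dS_cont x0 a b : S1 x0 -> S1 a -> S1 b ->
  dc a b < Rmin (dS x0 a) (1 - dS x0 a) -> Rabs (dS x0 b - dS x0 a) <= dc a b.
Proof.
  intros H0 Ha Hb. unfold dc. rewrite !dS_conc by auto. unfold S1 in *.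
  repeat destruct Rle_dec; unfold Rmin; repeat destruct Rle_dec; unfold Rabs; repeat destruct Rcase_abs; lra.
Qed.

Lemma cont_ed f x : (forall eps, 0 < eps -> exists del, 0 < del /\ forall y, Rabs (y - x) < del -> Rabs (f y - f x) < eps) -> continuity_pt f x.
Proof.
  intros H eps Heps. destruct (H eps Heps) as [d [Hd Hf]]. exists d. split; auto.
  intros y [_ Hy]. apply Hf. exact Hy.
Qed.

Lemma S1_frac z : S1 (frac_part z).
Proof. apply frac_rng. Qed.

Lemma V_full V : (forall x, V x -> S1 x) -> homeomorphic_to_S1 V -> forall x, S1 x -> V x.
Proof.
  intros HVS [phi [psi [[Hphi1 Hphi2] [_ [Hpp _]]]]] x0 Hx0.
  apply NNPP; intro Hn.
  set (F := fun x => dS x0 (phi x)).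
  assert (Finj : forall x y, S1 x -> S1 y -> F x = F y -> x = y).
  { intros x y Hx Hy HF. rewrite <- (Hpp x Hx), <- (Hpp y Hy). f_equal.
    apply (dS_inj x0); auto. }
  assert (Gc : forall c t, continuity_pt (fun t => F (frac_part (t + c))) t).
  { intros c t. apply cont_ed. intros eps Heps.
    set (x := frac_part (t + c)). assert (Hx : S1 x) by apply S1_frac.
    set (p := phi x). assert (Hp : S1 p) by (apply HVS, Hphi1, Hx).
    assert (Hpn : p <> x0) by (intro E; apply Hn; rewrite <- E; apply Hphi1, Hx).
    assert (Hd : 0 < dS x0 p).
    { destruct (frac_rng (p - x0)) as [H1 _]. destruct H1 as [H1|H1]; auto.
      exfalso. apply Hpn. symmetry. apply dS_eq0; auto. }
    assert (Hd1 : dS x0 p < 1) by apply frac_rng.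
    destruct (Hphi2 x Hx (Rmin eps (Rmin (dS x0 p) (1 - dS x0 p)))) as [del [Hdel Hc]].
    { repeat apply Rmin_pos; lra. }
    exists del. split; auto. intros y Hy.
    assert (Hxy : dc x (frac_part (y + c)) < del).
    { eapply Rle_lt_trans. apply dc_frac. replace (y + c - (t + c)) with (y - t) by ring. auto. }
    specialize (Hc _ (S1_frac _) Hxy).
    unfold F. fold x. fold p.
    eapply Rle_lt_trans. apply dS_cont; auto. apply HVS, Hphi1, S1_frac.
    eapply Rlt_le_trans. apply Hc. apply Rmin_r.
    eapply Rlt_le_trans. apply Hc. apply Rmin_l. }
  set (k := fun t => F (frac_part (t + 0)) - F (frac_part (t + /2))).
  assert (kc : continuity k).
  { intro t. apply continuity_pt_minus; apply Gc. }
  assert (f0 : frac_part 0 = 0) by (apply frac_id; lra).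
  assert (fh : frac_part (/2) = /2) by (apply frac_id; lra).
  assert (f1 : frac_part 1 = 0) by (apply frac_unique with (n := 1%Z); simpl; lra).
  assert (k0 : k 0 = F 0 - F (/2)).
  { unfold k. replace (0+0) with 0 by ring. replace (0 + /2) with (/2) by ring. rewrite f0, fh. auto. }
  assert (kh : k (/2) = F (/2) - F 0).
  { unfold k. rewrite Rplus_0_r, fh. replace (/2 + /2) with 1 by field. rewrite f1. auto. }
  destruct (IVT_gen k 0 (/2) 0 kc) as [t [Ht Hk]].
  { rewrite k0, kh. unfold Rmin, Rmax. repeat destruct Rle_dec; lra. }
  unfold k in Hk. apply Rminus_diag_uniq in Hk.
  apply Finj in Hk; try apply S1_frac.
  assert (frac_part (/2) = 0).
  { replace (/2) with ((t + /2) - (t + 0)) by ring. rewrite <- frac_sub, Hk.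
    replace (frac_part (t + /2) - frac_part (t + /2)) with 0 by ring. auto. }
  lra.
Qed.

Lemma gamma_props V E u : (forall x, V x -> S1 x) -> (forall x y, E x y -> V x /\ V y) ->
  0 <= gamma E 1 u <= 1 /\
  (forall t, 0 <= t < gamma E 1 u -> exists v, E u v /\ t < dS u v).
Proof.
  intros HVS HEV. unfold gamma.
  set (S := fun s => exists p, p O = u /\ is_path E p 1 /\ s = path_len p 1).
  assert (HS : forall s, S s -> exists v, E u v /\ s = dS u v).
  { intros s [p [H0 [Hp Hs]]]. exists (p 1%nat). split.
    rewrite <- H0. apply Hp. auto. rewrite Hs. simpl. rewrite H0. ring. }
  assert (HS1 : forall s, S s -> 0 <= s < 1).
  { intros s Hs. destruct (HS s Hs) as [v [_ ->]]. apply frac_rng. }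
  destruct (Lub_Rbar_correct S) as [Hub Hlub].
  destruct (Lub_Rbar S) as [l| |]; simpl.
  - assert (l <= 1).
    { change (Rbar_le l 1). apply Hlub. intros x Hx. simpl. specialize (HS1 x Hx). lra. }
    assert (0 <= l).
    { destruct (Rle_dec 0 l); auto. exfalso.
      assert (Hm : is_ub_Rbar S m_infty).
      { intros x Hx. specialize (HS1 x Hx). specialize (Hub x Hx). simpl in Hub. lra. }
      specialize (Hlub _ Hm). simpl in Hlub. auto. }
    split. lra.
    intros t Ht. apply NNPP. intro Hn.
    assert (Hm : is_ub_Rbar S t).
    { intros x Hx. simpl. destruct (HS x Hx) as [v [Hv ->]].
      destruct (Rle_dec (dS u v) t); auto. exfalso. apply Hn. exists v. split; auto. lra. }
    specialize (Hlub _ Hm). simpl in Hlub. lra.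
  - exfalso. assert (Hm : is_ub_Rbar S 1).
    { intros x Hx. simpl. specialize (HS1 x Hx). lra. }
    specialize (Hlub _ Hm). simpl in Hlub. auto.
  - split. lra. intros t Ht. lra.
Qed.

Lemma dc_refl x : dc x x = 0.
Proof. unfold dc, dS. replace (x - x) with 0 by ring. rewrite frac_id by lra. unfold Rmin. destruct Rle_dec; auto. Qed.

Theorem lemma4p5 (V : R -> Prop) (E : R -> R -> Prop) (dV : R -> R -> R) (u : R) :
  digraph V E -> cyclic V E ->
  closed_in_S1 V -> continuous_graph E V -> metric_graph V E dV ->
  homeomorphic_to_S1 V -> V u ->
  forall r, 0 <= r <= gammaV E dV u ->
  forall eps, 0 < eps -> exists del, 0 < del /\
    forall s, 0 <= s <= gammaV E dV u -> Rabs (s - r) < del ->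
      dc (g V E dV r u) (g V E dV s u) < eps.
Proof.
  intros [HVS [HEV _]] Hcyc _ _ [[Hnn [Hz [Hsym Htri]]] [[Hi1 _] Hm]] Hhom Hu r Hr eps Heps.
  assert (Vf : forall x, S1 x -> V x) by (apply V_full; auto).
  assert (Su : S1 u) by auto.
  destruct (gamma_props V E u HVS HEV) as [Ha Hsup].
  set (a := gamma E 1 u) in *.
  assert (fu : u = frac_part u) by (symmetry; apply frac_id; apply Su).
  set (w := fun t => frac_part (u + t)).
  set (H := fun t => dV u (w t)).
  assert (Hf1 : f1 E u = w a) by reflexivity.
  assert (HgV : gammaV E dV u = H a) by reflexivity.
  rewrite HgV in *.
  destruct (Rle_lt_or_eq_dec _ _ (proj2 Ha)) as [Ha1 | Ha1].
  2:{ exists 1. split. lra. intros s Hs _. assert (H a = 0).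
      { unfold H, w. rewrite Ha1. replace (u+1) with (u + IZR 1) by (simpl; ring).
        rewrite frac_shift, <- fu. apply Hz; auto. }
      replace s with r by lra. rewrite dc_refl. lra. }
  assert (Sw : forall t, S1 (w t)) by (intro; apply frac_rng).
  assert (Vw : forall t, V (w t)) by auto.
  assert (HwdS : forall t, 0 <= t < 1 -> dS u (w t) = t).
  { intros t Ht. unfold dS, w. rewrite fu at 2. rewrite frac_sub.
    replace (u + t - u) with t by ring. apply frac_id; auto. }
  assert (Hwinv : forall v, S1 v -> w (dS u v) = v).
  { intros v Hv. unfold w, dS.
    replace (u + frac_part (v - u)) with (v + IZR (- Int_part (v - u))).
    rewrite frac_shift. apply frac_id; apply Hv.
    rewrite opp_IZR. pose proof (frac_decomp (v - u)). lra. }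
  assert (Hw12 : forall t1 t2, 0 <= t1 <= t2 -> t2 < 1 -> dS (w t1) (w t2) = t2 - t1).
  { intros t1 t2 H1 H2. unfold dS, w. rewrite frac_sub.
    replace (u + t2 - (u + t1)) with (t2 - t1) by ring. apply frac_id; lra. }
  assert (Hwv : forall t v, S1 v -> 0 <= t <= dS u v -> dS (w t) v = dS u v - t).
  { intros t v Hv Ht. unfold dS, w. replace (v - frac_part (u + t)) with (frac_part v - frac_part (u + t)) by (rewrite (frac_id v) by apply Hv; auto).
    rewrite frac_sub. apply frac_unique with (n := Int_part (v - u)).
    unfold dS in Ht. destruct (frac_rng (v - u)). lra.
    pose proof (frac_decomp (v - u)). lra. }
  assert (Hdcw : forall t t', dc (w t) (w t') <= Rabs (t' - t)).
  { intros t t'. unfold w. eapply Rle_trans. apply dc_frac.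
    replace (u + t' - (u + t)) with (t' - t) by ring. lra. }
  assert (Hcont : continuity H).
  { intro t. apply cont_ed. intros e He. destruct (Hi1 (w t) (Vw t) e He) as [d [Hd Hc]].
    exists d. split; auto. intros y Hy.
    assert (Hdy : dV (w t) (w y) < e).
    { apply Hc; auto. eapply Rle_lt_trans. apply Hdcw. auto. }
    unfold H. pose proof (Htri u (w t) (w y) Hu (Vw t) (Vw y)) as T1.
    pose proof (Htri u (w y) (w t) Hu (Vw y) (Vw t)) as T2.
    rewrite (Hsym (w y) (w t)) in T2 by auto.
    unfold Rabs. destruct Rcase_abs; lra. }
  assert (H0 : H 0 = 0).
  { unfold H, w. rewrite Rplus_0_r, <- fu. apply Hz; auto. }
  assert (Hpos : forall t, 0 < t < 1 -> 0 < H t).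
  { intros t Ht. unfold H. destruct (Hnn u (w t) Hu (Vw t)) as [Hp|Hp]; auto.
    exfalso. symmetry in Hp. apply (proj1 (Hz u (w t) Hu (Vw t))) in Hp.
    pose proof (HwdS t) as T1. rewrite <- Hp in T1. unfold dS in T1.
    replace (u - u) with 0 in T1 by ring. rewrite frac_id in T1 by lra. assert (0 = t) by (apply T1; lra). lra. }
  assert (Hmono1 : forall t1 t2, 0 < t1 < t2 -> t2 < a -> H t1 < H t2).
  { intros t1 t2 Ht Ht2. destruct (Hsup t2) as [v [Hv Hvt]]. lra.
    assert (Sv : S1 v) by (apply HVS, (HEV u v Hv)).
    assert (Hd1 : dS u v < 1) by apply frac_rng.
    destruct (Hcyc u v Hv (w t1) (Vw t1)) as [E1 E2].
    { unfold strictly_between. rewrite HwdS; lra. }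
    destruct (Hcyc (w t1) v E2 (w t2) (Vw t2)) as [E3 _].
    { unfold strictly_between. rewrite Hw12, Hwv; auto; lra. }
    apply (Hm _ _ _ E1 E3). }
  assert (Hmono2 : forall t1, 0 < t1 < a -> H t1 < H a).
  { intros t1 Ht1. set (t' := (t1 + a) / 2).
    assert (H t1 < H t') by (apply Hmono1; unfold t'; lra).
    assert (H t' <= H a).
    { destruct (Rle_dec (H t') (H a)) as [|Hn]; auto. exfalso.
      pose proof (Hcont a) as Ca. unfold continuity_pt, continue_in, limit1_in, limit_in in Ca.
      destruct (Ca (H t' - H a)) as [d [Hd Hc]]. lra.
      assert (Rmin d (a - t') > 0) by (apply Rmin_pos; unfold t'; lra).
      assert (Rmin d (a - t') <= d) by apply Rmin_l.
      assert (Rmin d (a - t') <= a - t') by apply Rmin_r.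
      set (t'' := a - Rmin d (a - t') / 2).
      assert (H t' < H t'') by (apply Hmono1; unfold t'', t' in *; lra).
      assert (Hx : R_dist (H t'') (H a) < H t' - H a).
      { apply (Hc t''). split. split. exact I. unfold t''; lra.
        simpl. unfold R_dist. rewrite Rabs_left; unfold t''; lra. }
      unfold R_dist in Hx. rewrite Rabs_right in Hx; lra. }
    lra. }
  assert (Hmono : forall t1 t2, 0 <= t1 < t2 -> t2 <= a -> H t1 < H t2).
  { intros t1 t2 Ht Ht2. destruct (Req_dec t1 0) as [->|Hn].
    rewrite H0. apply Hpos. lra.
    destruct (Req_dec t2 a) as [->|Hn2]. apply Hmono2; lra. apply Hmono1; lra. }
  assert (Hmonol : forall t1 t2, 0 <= t1 <= t2 -> t2 <= a -> H t1 <= H t2).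
  { intros t1 t2 Ht Ht2. destruct (Req_dec t1 t2) as [->|Hn]. lra.
    left. apply Hmono; lra. }
  assert (Ha0 : 0 <= H a) by (apply Hnn; auto).
  assert (Hg : forall r', 0 <= r' <= H a -> 0 <= dS u (g V E dV r' u) <= a /\
     g V E dV r' u = w (dS u (g V E dV r' u)) /\ H (dS u (g V E dV r' u)) = r').
  { intros r' Hr'.
    assert (Hex : exists x, arcV V u (f1 E u) x /\ dV u x = r').
    { destruct (IVT_gen H 0 a r' Hcont) as [t [Ht Ht2]].
      { rewrite H0. unfold Rmin, Rmax; repeat destruct Rle_dec; lra. }
      rewrite Rmin_left in Ht by lra. rewrite Rmax_right in Ht by lra.
      exists (w t). split. split. auto. rewrite Hf1, !HwdS; lra. exact Ht2. }
    pose proof (epsilon_spec (inhabits 0) _ Hex) as Hx.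
    unfold g. set (x := epsilon _ _) in *.
    destruct Hx as [[Hv Harc] Hd].
    rewrite Hf1, HwdS in Harc by lra.
    assert (Sx : S1 x) by auto.
    assert (Hwx : w (dS u x) = x) by (apply Hwinv; auto).
    split. split. apply frac_rng. auto.
    split. auto. unfold H. rewrite Hwx. auto. }
  destruct (Hg r Hr) as [Htr [Hgr HHr]].
  set (tr := dS u (g V E dV r u)) in *.
  assert (D1 : exists d1, 0 < d1 /\ forall t, 0 <= t <= a -> t <= tr - eps/2 -> H t <= r - d1).
  { destruct (Rle_dec 0 (tr - eps/2)).
    - exists (H tr - H (tr - eps/2)). split.
      assert (H (tr - eps/2) < H tr) by (apply Hmono; lra). lra.
      intros t Ht1 Ht2. assert (H t <= H (tr - eps/2)) by (apply Hmonol; lra). lra.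
    - exists 1. split. lra. intros; lra. }
  assert (D2 : exists d2, 0 < d2 /\ forall t, 0 <= t <= a -> tr + eps/2 <= t -> r + d2 <= H t).
  { destruct (Rle_dec (tr + eps/2) a).
    - exists (H (tr + eps/2) - H tr). split.
      assert (H tr < H (tr + eps/2)) by (apply Hmono; lra). lra.
      intros t Ht1 Ht2. assert (H (tr + eps/2) <= H t) by (apply Hmonol; lra). lra.
    - exists 1. split. lra. intros; lra. }
  destruct D1 as [d1 [Hd1 D1]]. destruct D2 as [d2 [Hd2 D2]].
  exists (Rmin d1 d2). split. apply Rmin_pos; auto.
  intros s Hs Hsr.
  destruct (Hg s Hs) as [Hts [Hgs HHs]].
  set (ts := dS u (g V E dV s u)) in *.
  rewrite Hgr, Hgs. eapply Rle_lt_trans. apply Hdcw.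
  apply Rabs_def2 in Hsr. destruct Hsr as [Hs1 Hs2].
  assert (Rmin d1 d2 <= d1) by apply Rmin_l. assert (Rmin d1 d2 <= d2) by apply Rmin_r.
  assert (tr - eps/2 < ts).
  { destruct (Rle_dec ts (tr - eps/2)); [|lra]. specialize (D1 ts Hts r0). lra. }
  assert (ts < tr + eps/2).
  { destruct (Rle_dec (tr + eps/2) ts); [|lra]. specialize (D2 ts Hts r0). lra. }
  apply Rabs_def1; lra.
Qed.
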